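(* Let $\mathbf{H}_1,\mathbf{H}_2$ be complex Hilbert spaces with $\mathbf{H}_1$ separable, $H=\mathbf{H}_1\otimes\mathbf{H}_2$, $\mathcal{A}:H\to H$ bounded linear and $\varphi\in H$. Let $y_1,\dots,y_n\in\mathbf{H}_2$ with $\langle y_i,y_j\rangle_2=\delta_{ij}$, and let $k_1,\dots,k_n\in\mathbf{H}_2$ be linearly independent with $\langle k_i,y_j\rangle_2=\delta_{ij}$. Let $\eta_1,\dots,\eta_n\in\mathbf{H}_2$ with $\|\eta_i\|=1$ and $\langle\eta_i,y_j\rangle_2=0$ for all $i,j$, let $\varepsilon\in\mathbb{R}$, and set $k'_i=k_i+\varepsilon\eta_i$. Assume $$\|\mathcal{A}\mathcal{P}_k\|+\|\varepsilon\,\mathcal{A}\tilde{\mathcal{P}}_\eta\|<1\qquad\text{and}\qquad\tilde{\mathcal{P}}_k\sum_{i=0}^{\infty}(\mathcal{A}\mathcal{P}_k)^i\varphi=0.$$ Then $\sum_{i=0}^\infty(\mathcal{A}\mathcal{P}_{k'})^i\varphi$ converges and $\tilde{\mathcal{P}}_{k'}\sum_{i=0}^{\infty}(\mathcal{A}\mathcal{P}_{k'})^i\varphi=0$.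
   Context: $H=\mathbf{H}_1\otimes\mathbf{H}_2$ is the Hilbert tensor product with inner product $\langle\cdot,\cdot\rangle$; $\langle\cdot,\cdot\rangle_1,\langle\cdot,\cdot\rangle_2$ are the inner products of $\mathbf{H}_1,\mathbf{H}_2$ (linear in the first argument). The partial inner product $\langle\cdot,\cdot\rangle_{2'}:H\times\mathbf{H}_2\to\mathbf{H}_1$ is determined by $\langle\langle x,y\rangle_{2'},z\rangle_1=\langle x,z\otimes y\rangle$ for all $x\in H$, $y\in\mathbf{H}_2$, $z\in\mathbf{H}_1$. For $u_1,\dots,u_n\in\mathbf{H}_2$: $\mathcal{P}_u x=x-\sum_{i=1}^n\langle x,y_i\rangle_{2'}\otimes u_i$ and $\tilde{\mathcal{P}}_u x=\sum_{i=1}^n\langle x,y_i\rangle_{2'}\otimes u_i$. $\|\cdot\|$ is the operator norm. *)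

(* Defs.v *)
From HB Require Import structures.
From mathcomp Require Import all_boot all_order all_algebra.
From mathcomp Require Import complex.
From mathcomp Require Import classical_sets reals.
Set Implicit Arguments. Unset Strict Implicit. Unset Printing Implicit Defensive.
Import Order.TTheory GRing.Theory Num.Theory.
Local Open Scope ring_scope.
Local Open Scope classical_set_scope.

Section Hilbert.
Variable R : realType.
Local Notation C := R[i].

Definition inner_product (V : lmodType C) (ip : V -> V -> C) : Prop :=
  [/\ (forall (a : C) (x y z : V), ip (a *: x + y) z = a * ip x z + ip y z),
      (forall x y : V, ip y x = (ip x y)^*),
      (forall x : V, 0 <= ip x x) &
      (forall x : V, ip x x = 0 -> x = 0)].

Definition hnorm (V : lmodType C) (ip : V -> V -> C) (x : V) : R :=
  Num.sqrt (complex.Re (ip x x)).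

Definition hconverges_to (V : lmodType C) (ip : V -> V -> C)
    (u : nat -> V) (l : V) : Prop :=
  forall e : R, 0 < e -> exists N : nat, forall n : nat, (N <= n)%N ->
    hnorm ip (u n - l) < e.

Definition hcauchy (V : lmodType C) (ip : V -> V -> C) (u : nat -> V) : Prop :=
  forall e : R, 0 < e -> exists N : nat, forall m n : nat, (N <= m)%N -> (N <= n)%N ->
    hnorm ip (u m - u n) < e.

Definition hilbert (V : lmodType C) (ip : V -> V -> C) : Prop :=
  inner_product ip /\
  (forall u : nat -> V, hcauchy ip u -> exists l, hconverges_to ip u l).

Definition separable (V : lmodType C) (ip : V -> V -> C) : Prop :=
  exists d : nat -> V, forall (x : V) (e : R), 0 < e ->
    exists n : nat, hnorm ip (x - d n) < e.

(* (H, ip, t) is the Hilbert tensor product of (H1, ip1) and (H2, ip2) with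
   t a b = a (x) b: t is bilinear, <a(x)b, c(x)d> = <a,c>_1 <b,d>_2, and the
   linear span of the elementary tensors is dense in H. *)
Definition hilbert_tensor (H1 H2 H : lmodType C)
    (ip1 : H1 -> H1 -> C) (ip2 : H2 -> H2 -> C) (ip : H -> H -> C)
    (t : H1 -> H2 -> H) : Prop :=
  [/\ hilbert ip,
      (forall (c : C) (a a' : H1) (b : H2), t (c *: a + a') b = c *: t a b + t a' b),
      (forall (c : C) (a : H1) (b b' : H2), t a (c *: b + b') = c *: t a b + t a b'),
      (forall (a c : H1) (b d : H2), ip (t a b) (t c d) = ip1 a c * ip2 b d) &
      (forall (x : H) (e : R), 0 < e -> exists (m : nat) (a : 'I_m -> H1) (b : 'I_m -> H2),
          hnorm ip (x - \sum_(j < m) t (a j) (b j)) < e)].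

(* the partial inner product <.,.>_{2'} : H x H2 -> H1, determined by
   <<x,y>_{2'}, z>_1 = <x, z (x) y> *)
Definition partial_inner (H1 H2 H : lmodType C)
    (ip1 : H1 -> H1 -> C) (ip : H -> H -> C) (t : H1 -> H2 -> H)
    (pip : H -> H2 -> H1) : Prop :=
  forall (x : H) (y : H2) (z : H1), ip1 (pip x y) z = ip x (t z y).

Definition bounded_linear (V : lmodType C) (ip : V -> V -> C) (A : V -> V) : Prop :=
  (forall (a : C) (x y : V), A (a *: x + y) = a *: A x + A y) /\
  exists M : R, forall x : V, hnorm ip (A x) <= M * hnorm ip x.

Definition opnorm (V : lmodType C) (ip : V -> V -> C) (T : V -> V) : R :=
  sup [set r : R | exists x : V, hnorm ip x <= 1 /\ r = hnorm ip (T x)].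

Definition Ptilde (H1 H2 H : lmodType C) (t : H1 -> H2 -> H) (pip : H -> H2 -> H1)
    (n : nat) (y u : 'I_n -> H2) (x : H) : H :=
  \sum_(i < n) t (pip x (y i)) (u i).

Definition Pproj (H1 H2 H : lmodType C) (t : H1 -> H2 -> H) (pip : H -> H2 -> H1)
    (n : nat) (y u : 'I_n -> H2) (x : H) : H :=
  x - Ptilde t pip y u x.

Definition neumann_partial (V : lmodType C) (T : V -> V) (phi : V) (N : nat) : V :=
  \sum_(i < N) iter i T phi.

End Hilbert.

(* Main.v *)
Require Import Defs.
From HB Require Import structures.
From mathcomp Require Import all_boot all_order all_algebra.
From mathcomp Require Import complex.
From mathcomp Require Import classical_sets reals.
From mathcomp Require Import ring lra.
Import Order.TTheory GRing.Theory Num.Theory.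
Set Implicit Arguments. Unset Strict Implicit.
Local Open Scope ring_scope.

Section IP.
Variable R : realType.
Variable V : lmodType R[i].
Variable ip : V -> V -> R[i].
Hypothesis hip : inner_product ip.

Local Notation N := (hnorm ip).
Local Notation Q x := (complex.Re (ip x x)).

Lemma ipDl x y z : ip (x + y) z = ip x z + ip y z.
Proof. case: hip => h _ _ _. by rewrite -[x]scale1r h mul1r scale1r. Qed.

Lemma ip0l z : ip 0 z = 0.
Proof. have := ipDl 0 0 z; rewrite addr0 => h. apply: (@addrI _ (ip 0 z)). by rewrite addr0 -h. Qed.

Lemma ipZl a x z : ip (a *: x) z = a * ip x z.
Proof. case: hip => h _ _ _. by rewrite -[a *: x]addr0 h ip0l addr0. Qed.

Lemma ipC x y : ip y x = Num.conj (ip x y).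
Proof. by case: hip. Qed.

Lemma ipDr x y z : ip z (x + y) = ip z x + ip z y.
Proof. by rewrite ipC ipDl rmorphD (ipC x z) (ipC y z). Qed.

Lemma ip0r z : ip z 0 = 0.
Proof. by rewrite ipC ip0l rmorph0. Qed.

Lemma ipZr_real (s : R) x z : ip z ((s%:C)%C *: x) = (s%:C)%C * ip z x.
Proof. rewrite ipC ipZl rmorphM (ipC x z). congr (_ * _). change (Complex s (- 0) = Complex s 0). by rewrite oppr0. Qed.

Lemma ip_suml I (r : seq I) (P : pred I) (f : I -> V) z :
  ip (\sum_(i <- r | P i) f i) z = \sum_(i <- r | P i) ip (f i) z.
Proof. by apply: (big_morph (fun x => ip x z)) => [x y|]; rewrite ?ipDl ?ip0l. Qed.

Lemma ReM_real (s : R) (w : R[i]) : complex.Re ((s%:C)%C * w) = s * complex.Re w.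
Proof. case: w => a b /=. ring. Qed.

Lemma ReD (w w' : R[i]) : complex.Re (w + w') = complex.Re w + complex.Re w'.
Proof. by case: w; case: w'. Qed.

Lemma ReC (w : R[i]) : complex.Re (Num.conj w) = complex.Re w.
Proof. by case: w. Qed.

Lemma Q_ge0 x : 0 <= Q x.
Proof. case: hip => _ _ h _. by have := h x; rewrite lecE => /andP[]. Qed.

Lemma ipxx_real x : ip x x = ((Q x)%:C)%C.
Proof.
case: hip => _ _ h _. have := h x; rewrite lecE => /andP[/eqP hi _].
by case E: (ip x x) hi => [a b] /= ->.
Qed.

Lemma N_ge0 x : 0 <= N x.
Proof. exact: sqrtr_ge0. Qed.

Lemma N_sq x : N x ^+ 2 = Q x.
Proof. by rewrite /hnorm sqr_sqrtr // Q_ge0. Qed.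

Lemma N_eq0 x : N x = 0 -> x = 0.
Proof.
move=> h. have hq : Q x = 0 by rewrite -N_sq h expr0n.
case: hip => _ _ _ hd. apply: hd. by rewrite ipxx_real hq.
Qed.

Lemma N0 : N 0 = 0.
Proof. by rewrite /hnorm ip0l /= sqrtr0. Qed.

Lemma Q_comb (s : R) x y :
  Q ((s%:C)%C *: x + y) = s ^+ 2 * Q x + 2 * s * complex.Re (ip x y) + Q y.
Proof.
rewrite ipDl !ipDr !ipZl !ipZr_real (ipC x y).
move: (ip x x) (ip x y) (ip y y) => [a1 a2] [b1 b2] [c1 c2] /=. ring.
Qed.

Lemma CS x y : complex.Re (ip x y) <= N x * N y.
Proof.
set b := complex.Re (ip x y).
have hb : b ^+ 2 <= Q x * Q y.
  have [hy|hy] := eqVneq (Q y) 0.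
    have y0 : y = 0 by apply: N_eq0; rewrite /hnorm hy sqrtr0.
    by rewrite /b y0 ip0r /= expr0n /= mulr_ge0 // Q_ge0.
  have hyp : 0 < Q y by rewrite lt_def hy Q_ge0.
  have := Q_ge0 ((- b / Q y)%:C%C *: y + x).
  rewrite Q_comb (ipC x y) ReC -/b.
  have -> : (- b / Q y) ^+ 2 * Q y + 2 * (- b / Q y) * b + Q x
        = Q x - b ^+ 2 / Q y by field.
  rewrite subr_ge0 => h.
  have e : b ^+ 2 = b ^+ 2 / Q y * Q y by rewrite mulfVK // gt_eqF.
  rewrite e; apply: ler_wpM2r => //; exact: ltW.
have h1 := N_ge0 x; have h2 := N_ge0 y.
rewrite -!N_sq -exprMn in hb.
have hp0 : 0 <= N x * N y by rewrite mulr_ge0.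
move: hb hp0; set p := N x * N y => hb hp0. nra.
Qed.

Lemma N_triangle x y : N (x + y) <= N x + N y.
Proof.
have h : Q (x + y) <= (N x + N y) ^+ 2.
  have := Q_comb 1 x y. rewrite scale1r => ->.
  have := CS x y. rewrite -!N_sq. have := N_ge0 x; have := N_ge0 y. nra.
rewrite -N_sq in h. have := N_ge0 (x + y); have := N_ge0 x; have := N_ge0 y. nra.
Qed.

Lemma N_scale (s : R) x : N ((s%:C)%C *: x) = `|s| * N x.
Proof.
rewrite /hnorm ipZl ipZr_real ReM_real ReM_real mulrA -expr2 sqrtrM ?sqr_ge0 //.
by rewrite sqrtr_sqr.
Qed.

Lemma N_opp x : N (- x) = N x.
Proof.
have -> : - x = ((-1)%:C)%C *: x by rewrite raddfN /= rmorph1 scaleN1r.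
by rewrite N_scale normrN normr1 mul1r.
Qed.

Lemma N_sub_sym x y : N (x - y) = N (y - x).
Proof. by rewrite -N_opp opprB. Qed.

Lemma N_sum I (r : seq I) (P : pred I) (f : I -> V) :
  N (\sum_(i <- r | P i) f i) <= \sum_(i <- r | P i) N (f i).
Proof.
elim/big_rec2: _ => [|i a b _ h]; first by rewrite N0.
apply: le_trans (N_triangle _ _) _. by rewrite lerD2l.
Qed.

Lemma N_small_eq0 z c : 0 <= c -> (forall d, 0 < d -> N z <= c * d) -> z = 0.
Proof.
move=> hc h. apply: N_eq0. apply/eqP; rewrite eq_le N_ge0 andbT.
rewrite leNgt; apply/negP => hz.
set d := N z / (c + 1).
have hd : d * (c + 1) = N z by rewrite /d mulfVK // gt_eqF // ltr_wpDl.
have dp : 0 < d by rewrite /d divr_gt0 // ltr_wpDl.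
have := h d dp. nra.
Qed.

End IP.

Section IP2.
Variable R : realType.
Variable V : lmodType R[i].
Variable ip : V -> V -> R[i].
Hypothesis hip : inner_product ip.

Lemma ipNl x z : ip (- x) z = - ip x z.
Proof. by rewrite -scaleN1r ipZl // mulN1r. Qed.

Lemma ipBl x y z : ip (x - y) z = ip x z - ip y z.
Proof. by rewrite ipDl // ipNl. Qed.

Lemma ip_ext u v : (forall z, ip u z = ip v z) -> u = v.
Proof.
move=> h. apply/eqP; rewrite -subr_eq0; apply/eqP.
case: hip => _ _ _ hd. apply: hd. by rewrite ipBl h subrr.
Qed.
End IP2.
From HB Require Import structures.
From mathcomp Require Import all_boot all_order all_algebra.
From mathcomp Require Import complex.
From mathcomp Require Import classical_sets reals.
From mathcomp Require Import ring lra.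
Import Order.TTheory GRing.Theory Num.Theory.
Set Implicit Arguments. Unset Strict Implicit.
Local Open Scope ring_scope.

Section Ops.
Variable R : realType.
Variable V : lmodType R[i].
Variable ip : V -> V -> R[i].
Hypothesis hip : inner_product ip.
Local Notation N := (hnorm ip).

Definition lin (T : V -> V) := forall a x y, T (a *: x + y) = a *: T x + T y.

Variable T : V -> V.
Hypothesis hT : lin T.

Lemma lin0 : T 0 = 0.
Proof.
have := hT 1 0 0; rewrite !scale1r !addr0 => h.
apply: (@addrI _ (T 0)). by rewrite addr0 -h.
Qed.

Lemma linD x y : T (x + y) = T x + T y.
Proof. by rewrite -{1}[x]scale1r hT scale1r. Qed.

Lemma linZ a x : T (a *: x) = a *: T x.
Proof. by rewrite -[a *: x]addr0 hT lin0 addr0. Qed.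

Lemma linN x : T (- x) = - T x.
Proof. by rewrite -scaleN1r linZ scaleN1r. Qed.

Lemma linB x y : T (x - y) = T x - T y.
Proof. by rewrite linD linN. Qed.

Lemma lin_sum I (r : seq I) (P : pred I) (f : I -> V) :
  T (\sum_(i <- r | P i) f i) = \sum_(i <- r | P i) T (f i).
Proof. by apply: big_morph => [x y|]; rewrite ?linD ?lin0. Qed.

Lemma lin_iter m : lin (iter m T).
Proof.
elim: m => [|m IH] a x y /=; first by [].
by rewrite IH hT.
Qed.

Variable K : R.
Hypothesis hK : forall x, N (T x) <= K * N x.

Local Open Scope classical_set_scope.
Let E := [set r : R | exists x : V, N x <= 1 /\ r = N (T x)].

Lemma E_ub : has_ubound E.
Proof.
exists `|K| => r [x [hx ->]].
apply: le_trans (hK x) _.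
apply: le_trans (_ : `|K| * N x <= _).
  by apply: ler_wpM2r; [exact: N_ge0 | exact: ler_norm].
by rewrite -[leRHS]mulr1 ler_wpM2l.
Qed.

Lemma opnorm_ge0 : 0 <= opnorm ip T.
Proof.
apply: (ub_le_sup E_ub). exists 0; split; first by rewrite N0 // ler01.
by rewrite lin0 N0.
Qed.

Lemma opnorm_bound x : N (T x) <= opnorm ip T * N x.
Proof.
have [h0|hp] := eqVneq (N x) 0.
  by rewrite (N_eq0 hip h0) lin0 N0 // mulr0.
have hpos : 0 < N x by rewrite lt_def hp N_ge0.
set r := N x.
have hx1 : N (((r^-1)%:C)%C *: x) = 1.
  by rewrite N_scale // ger0_norm ?invr_ge0 ?N_ge0 // mulVf.
have hE : E (N (T (((r^-1)%:C)%C *: x))).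
  exists (((r^-1)%:C)%C *: x). by rewrite hx1.
have := ub_le_sup E_ub hE.
rewrite linZ N_scale // ger0_norm ?invr_ge0 ?N_ge0 // => h.
have -> : N (T x) = r * (r^-1 * N (T x)) by rewrite mulrA mulfV // mul1r.
rewrite mulrC. apply: ler_wpM2r => //. exact: N_ge0.
Qed.

End Ops.
From HB Require Import structures.
From mathcomp Require Import all_boot all_order all_algebra.
From mathcomp Require Import complex.
From mathcomp Require Import classical_sets reals.
From mathcomp Require Import ring lra.
Import Order.TTheory GRing.Theory Num.Theory.
Set Implicit Arguments. Unset Strict Implicit.
Local Open Scope ring_scope.

Lemma bernoulli_ineq (R : realType) (d : R) m : 0 <= d -> 1 + m%:R * d <= (1 + d) ^+ m.
Proof.
move=> hd; elim: m => [|m IH]; first by rewrite mul0r addr0 expr0.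
rewrite exprS -addn1 natrD.
have h1 : 0 <= m%:R * d by rewrite mulr_ge0 ?ler0n.
nra.
Qed.

Lemma geo_small (R : realType) (q c e : R) : 0 <= q -> q < 1 -> 0 <= c -> 0 < e ->
  exists m, q ^+ m * c < e.
Proof.
move=> q0 q1 c0 e0.
have [->|qn0] := eqVneq q 0; first by exists 1%N; rewrite expr1 mul0r.
have qp : 0 < q by rewrite lt_def qn0 q0.
set d := q^-1 - 1.
have dp : 0 < d.
  by rewrite /d subr_gt0 invf_gt1.
have hq : q * (1 + d) = 1 by rewrite /d addrC subrK mulfV.
have hcd : 0 <= c / (e * d) by rewrite divr_ge0 // mulr_ge0 // ltW.
have hb := archi_boundP hcd.
set m := Num.bound (c / (e * d)) in hb.
exists m.
have hc : c < e * (m%:R * d).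
  have hed : 0 < e * d by rewrite mulr_gt0.
  have : c / (e * d) * (e * d) < m%:R * (e * d). by rewrite ltr_pM2r.
  by rewrite mulfVK ?gt_eqF // mulrCA.
have hB := bernoulli_ineq m (ltW dp).
have hP : 0 < q ^+ m by rewrite exprn_gt0.
have hP1 : q ^+ m * (1 + d) ^+ m = 1 by rewrite -exprMn hq expr1n.
have hmd : 0 <= m%:R * d by rewrite mulr_ge0 ?ler0n // ltW.
nra.
Qed.
From HB Require Import structures.
From mathcomp Require Import all_boot all_order all_algebra.
From mathcomp Require Import complex.
From mathcomp Require Import classical_sets reals.
From mathcomp Require Import ring lra.
Import Order.TTheory GRing.Theory Num.Theory.
Set Implicit Arguments. Unset Strict Implicit.
Local Open Scope ring_scope.

Section Tensor.
Variable R : realType.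
Variables H1 H2 H : lmodType R[i].
Variables (ip1 : H1 -> H1 -> R[i]) (ip2 : H2 -> H2 -> R[i]) (ip : H -> H -> R[i]).
Variables (t : H1 -> H2 -> H) (pip : H -> H2 -> H1).
Hypotheses (h1 : inner_product ip1) (h2 : inner_product ip2) (h : inner_product ip).
Hypothesis htl : forall (c : R[i]) (a a' : H1) (b : H2), t (c *: a + a') b = c *: t a b + t a' b.
Hypothesis htr : forall (c : R[i]) (a : H1) (b b' : H2), t a (c *: b + b') = c *: t a b + t a b'.
Hypothesis hti : forall (a c : H1) (b d : H2), ip (t a b) (t c d) = ip1 a c * ip2 b d.
Hypothesis hpi : partial_inner ip1 ip t pip.

Lemma t0l b : t 0 b = 0.
Proof.
have := htl 1 0 0 b; rewrite !scale1r !addr0 => e.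
apply: (@addrI _ (t 0 b)). by rewrite addr0 -e.
Qed.

Lemma tDr a b b' : t a (b + b') = t a b + t a b'.
Proof. by rewrite -{1}[b]scale1r htr scale1r. Qed.

Lemma t0r a : t a 0 = 0.
Proof.
have := tDr a 0 0; rewrite !addr0 => e.
apply: (@addrI _ (t a 0)). by rewrite addr0 -e.
Qed.

Lemma tZr a c b : t a (c *: b) = c *: t a b.
Proof. by rewrite -[c *: b]addr0 htr t0r addr0. Qed.

Lemma N_t a b : hnorm ip (t a b) = hnorm ip1 a * hnorm ip2 b.
Proof.
rewrite /hnorm hti (ipxx_real h1 a) (ipxx_real h2 b) ReM_real /=.
by rewrite sqrtrM // Q_ge0.
Qed.

Lemma pip_lin a x x' yy : pip (a *: x + x') yy = a *: pip x yy + pip x' yy.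
Proof.
apply: (ip_ext h1) => z.
by rewrite hpi (ipDl h1) (ipZl h1) (ipDl h) (ipZl h) !hpi.
Qed.

Lemma pip_bound x yy : hnorm ip1 (pip x yy) <= hnorm ip x * hnorm ip2 yy.
Proof.
set p := pip x yy.
have e : hnorm ip1 p ^+ 2 <= hnorm ip x * (hnorm ip1 p * hnorm ip2 yy).
  rewrite (N_sq h1) /p hpi -N_t. exact: CS.
have := N_ge0 ip1 p. have := N_ge0 ip x. have := N_ge0 ip2 yy.
set P := hnorm ip x * hnorm ip2 yy.
have hP : 0 <= P by rewrite mulr_ge0 // N_ge0.
move: e; rewrite mulrCA -/P => e. nra.
Qed.

Variable n : nat.
Variable yv : 'I_n -> H2.

Lemma Ptilde_lin u : lin (Ptilde t pip yv u).
Proof.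
move=> a x x'. rewrite /Ptilde.
under eq_bigr do rewrite pip_lin htl.
by rewrite big_split /= scaler_sumr.
Qed.

Lemma Ptilde_bound u x : hnorm ip (Ptilde t pip yv u x)
   <= (\sum_(i < n) hnorm ip2 (yv i) * hnorm ip2 (u i)) * hnorm ip x.
Proof.
apply: le_trans (N_sum h _ _ _) _. rewrite mulr_suml.
apply: ler_sum => i _. rewrite N_t.
rewrite mulrAC. apply: ler_wpM2r; first exact: N_ge0.
by rewrite mulrC pip_bound.
Qed.

Lemma Pproj_lin u : lin (Pproj t pip yv u).
Proof.
move=> a x x'. rewrite /Pproj Ptilde_lin scalerBr opprD addrACA. done.
Qed.

Lemma Pproj_bound u x : hnorm ip (Pproj t pip yv u x)
   <= (1 + \sum_(i < n) hnorm ip2 (yv i) * hnorm ip2 (u i)) * hnorm ip x.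
Proof.
rewrite /Pproj. apply: le_trans (N_triangle h _ _) _.
rewrite N_opp // mulrDl mul1r lerD2l. exact: Ptilde_bound.
Qed.

Lemma Ptilde_k' (k eta : 'I_n -> H2) (s : R) x :
  Ptilde t pip yv (fun i => k i + (s%:C)%C *: eta i) x
  = Ptilde t pip yv k x + (s%:C)%C *: Ptilde t pip yv eta x.
Proof.
rewrite /Ptilde scaler_sumr -big_split /=.
apply: eq_bigr => i _. by rewrite tDr tZr.
Qed.

Lemma pip_zero (k : 'I_n -> H2) S :
  (forall i j, ip2 (k i) (yv j) = (i == j)%:R) ->
  Ptilde t pip yv k S = 0 -> forall j, pip S (yv j) = 0.
Proof.
move=> hk hS j. apply: (ip_ext h1) => z.
rewrite (ip0l h1) hpi.
have : ip (Ptilde t pip yv k S) (t z (yv j)) = 0 by rewrite hS (ip0l h).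
rewrite /Ptilde (ip_suml h) (bigD1 j) //= big1 ?addr0.
  by rewrite hti hk eqxx mulr1 hpi.
move=> i hij. by rewrite hti hk (negbTE hij) mulr0.
Qed.

End Tensor.
From HB Require Import structures.
From mathcomp Require Import all_boot all_order all_algebra.
From mathcomp Require Import complex.
From mathcomp Require Import classical_sets reals.
From mathcomp Require Import ring lra.
Import Order.TTheory GRing.Theory Num.Theory.
Set Implicit Arguments. Unset Strict Implicit.
Local Open Scope ring_scope.

Section Neumann.
Variable R : realType.
Variable V : lmodType R[i].
Variable ip : V -> V -> R[i].
Hypothesis hip : inner_product ip.
Variable T : V -> V.
Hypothesis hT : lin T.

Lemma neumannS phi m : neumann_partial T phi m.+1 = phi + T (neumann_partial T phi m).
Proof.
rewrite /neumann_partial big_ord_recl /= (lin_sum hT); congr (_ + _).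
Qed.

Lemma neumann_err phi S : S = phi + T S ->
  forall m, S - neumann_partial T phi m = iter m T S.
Proof.
move=> hS; elim=> [|m IH]; first by rewrite /neumann_partial big_ord0 subr0.
rewrite neumannS /= -IH (linB hT).
rewrite {1}hS opprD addrACA subrr add0r. done.
Qed.

Lemma iter_bound q x : 0 <= q -> (forall z, hnorm ip (T z) <= q * hnorm ip z) ->
  forall m, hnorm ip (iter m T x) <= q ^+ m * hnorm ip x.
Proof.
move=> q0 hq; elim=> [|m IH] /=; first by rewrite expr0 mul1r.
apply: le_trans (hq _) _. rewrite exprS -mulrA. exact: ler_wpM2l.
Qed.
End Neumann.

Theorem theorem3 (R : realType) (H1 H2 H : lmodType R[i])
    (ip1 : H1 -> H1 -> R[i]) (ip2 : H2 -> H2 -> R[i]) (ip : H -> H -> R[i])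
    (t : H1 -> H2 -> H) (pip : H -> H2 -> H1)
    (A : H -> H) (phi : H) (n : nat) (y k eta : 'I_n -> H2) (eps : R) :
  hilbert ip1 -> separable ip1 -> hilbert ip2 ->
  hilbert_tensor ip1 ip2 ip t ->
  partial_inner ip1 ip t pip ->
  bounded_linear ip A ->
  (forall i j : 'I_n, ip2 (y i) (y j) = (i == j)%:R) ->
  (forall c : 'I_n -> R[i], \sum_(i < n) c i *: k i = 0 -> forall i, c i = 0) ->
  (forall i j : 'I_n, ip2 (k i) (y j) = (i == j)%:R) ->
  (forall i : 'I_n, hnorm ip2 (eta i) = 1) ->
  (forall i j : 'I_n, ip2 (eta i) (y j) = 0) ->
  let k' := fun i : 'I_n => k i + (eps%:C)%C *: eta i in
  opnorm ip (fun x => A (Pproj t pip y k x))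
    + opnorm ip (fun x => (eps%:C)%C *: A (Ptilde t pip y eta x)) < 1 ->
  (exists S : H, hconverges_to ip (neumann_partial (fun x => A (Pproj t pip y k x)) phi) S
                 /\ Ptilde t pip y k S = 0) ->
  exists S' : H, hconverges_to ip (neumann_partial (fun x => A (Pproj t pip y k' x)) phi) S'
                 /\ Ptilde t pip y k' S' = 0.
Proof.
move=> [h1 _] _ [h2 _] [[h _] htl htr hti _] hpi [hA [M hM]] hy _ hk _ _ k' hq [S [hconv hS]].
pose Tk := fun x => A (Pproj t pip y k x).
pose Te := fun x => (eps%:C)%C *: A (Ptilde t pip y eta x).
pose T' := fun x => A (Pproj t pip y k' x).
have linA : lin A by [].
have linTk : lin Tk.
  move=> a x x'. by rewrite /Tk (Pproj_lin h1 h htl hpi) hA.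
have linTe : lin Te.
  move=> a x x'. by rewrite /Te (Ptilde_lin h1 h htl hpi) hA scalerDr !scalerA mulrC.
have linT' : lin T'.
  move=> a x x'. by rewrite /T' (Pproj_lin h1 h htl hpi) hA.
have hAb : forall z, hnorm ip (A z) <= `|M| * hnorm ip z.
  move=> z. apply: le_trans (hM z) _. apply: ler_wpM2r; [exact: N_ge0 | exact: ler_norm].
have bTk : forall x, hnorm ip (Tk x) <=
   (`|M| * (1 + \sum_(i < n) hnorm ip2 (y i) * hnorm ip2 (k i))) * hnorm ip x.
  move=> x. apply: le_trans (hAb _) _. rewrite -mulrA. apply: ler_wpM2l => //.
  exact: (Pproj_bound h1 h2 h hti hpi).
have bTe : forall x, hnorm ip (Te x) <=
   (`|eps| * (`|M| * \sum_(i < n) hnorm ip2 (y i) * hnorm ip2 (eta i))) * hnorm ip x.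
  move=> x. rewrite /Te N_scale // -mulrA. apply: ler_wpM2l => //.
  apply: le_trans (hAb _) _. rewrite -mulrA. apply: ler_wpM2l => //.
  exact: (Ptilde_bound h1 h2 h hti hpi).
have eT' : forall x, T' x = Tk x - Te x.
  move=> x. rewrite /T' /Tk /Te /Pproj /k' (Ptilde_k' pip htr) opprD addrA.
  by rewrite linB // linZ.
set q := opnorm ip Tk + opnorm ip Te.
have q0 : 0 <= q by rewrite addr_ge0 // (opnorm_ge0 h linTk bTk, opnorm_ge0 h linTe bTe).
have bT' : forall x, hnorm ip (T' x) <= q * hnorm ip x.
  move=> x. rewrite eT'. apply: le_trans (N_triangle h _ _) _.
  rewrite (N_opp h) /q mulrDl. apply: lerD.
    exact: (@opnorm_bound _ _ _ h Tk linTk _ bTk x).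
  exact: (@opnorm_bound _ _ _ h Te linTe _ bTe x).
have hp0 := pip_zero h1 h hti hpi hk hS.
have hPt0 : forall u, Ptilde t pip y u S = 0.
  move=> u. rewrite /Ptilde. apply: big1 => i _. by rewrite hp0 (t0l htl).
have fixk : S = phi + Tk S.
  apply/eqP; rewrite -subr_eq0; apply/eqP.
  apply: (N_small_eq0 h (_ : 0 <= 1 + opnorm ip Tk)).
    by rewrite addr_ge0 // (opnorm_ge0 h linTk bTk).
  move=> d dp. have [N0 hN0] := hconv d dp.
  set sN := neumann_partial Tk phi N0.
  have e : S - (phi + Tk S) = (S - neumann_partial Tk phi N0.+1) + Tk (sN - S).
    rewrite (neumannS linTk) (linB linTk) -/sN !opprD !addrA subrK. done.
  rewrite e. apply: le_trans (N_triangle h _ _) _.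
  rewrite mulrDl mul1r. apply: lerD.
    rewrite N_sub_sym //. apply: ltW. exact: hN0.
  apply: le_trans (@opnorm_bound _ _ _ h Tk linTk _ bTk _) _.
  apply: ler_wpM2l; first by rewrite (opnorm_ge0 h linTk bTk).
  apply: ltW. exact: hN0.
have fix' : S = phi + T' S.
  have -> : T' S = Tk S by rewrite /T' /Tk /Pproj !hPt0.
  exact: fixk.
exists S; split; last exact: hPt0.
move=> e e0.
have hq1 : q < 1 by exact: hq.
have [m hm] := geo_small q0 hq1 (N_ge0 ip S) e0.
exists m => m' hm'.
rewrite N_sub_sym // (neumann_err linT' fix').
have hb := @iter_bound _ _ _ T' q S q0 bT' m'. apply: (le_lt_trans hb).
apply: le_lt_trans hm. apply: ler_wpM2r; first exact: N_ge0.
apply: ler_wiXn2l => //. by rewrite ltW.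
Qed.
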